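(* Let $p$ be the POP of length 4 defined by the relations $1>3$, $1>2$ and $4>2$; equivalently, avoiding $p$ means simultaneously avoiding the patterns $4132, 4213, 3214, 4123, 3124$. Let $a(n)=|S_n(p)|$. Then $a(0)=a(1)=1$, $a(2)=2$, and for $n\geq 3$, $$a(n)=4a(n-1)-3a(n-2)+a(n-3);$$ consequently, for $n\geq 1$, $a(n)=\sum_{i=0}^{n-1}\binom{n+2i-1}{3i}$. Moreover, $$\sum_{n\geq 0}a(n)x^n=\frac{1-3x+x^2}{1-4x+3x^2-x^3}.$$
   Context: An $n$-permutation is a word $\pi=\pi_1\cdots\pi_n$ containing each of $1,\ldots,n$ exactly once; $S_n$ is the set of $n$-permutations ($S_0$ consists of the empty permutation). A partially ordered pattern (POP) $p$ of length $k$ is a partial order on the label set $\{1,\ldots,k\}$; it is described by a set of generating relations, where a relation $x>y$ means that in an occurrence the entry in the $x$-th chosen position must be larger than the entry in the $y$-th chosen position, and labels not involved in any relation are unconstrained. An $n$-permutation $\pi$ contains $p$ if there are indices $1\leq i_1<\cdots<i_k\leq n$ such that $\pi_{i_x}>\pi_{i_y}$ whenever $x>y$ in the partial order; otherwise $\pi$ avoids $p$. $S_n(p)$ denotes the set of $n$-permutations avoiding $p$. A permutation $\pi$ avoids a classical pattern $q$ if it has no subsequence order-isomorphic to $q$. *)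

(* Defs.v *)
From mathcomp Require Import all_boot all_order all_algebra all_fingroup.
Set Implicit Arguments. Unset Strict Implicit. Unset Printing Implicit Defensive.

(* An n-permutation is represented as s : 'S_n (a permutation of 'I_n = {0..n-1});
   the word pi_1 ... pi_n is (s 0) ... (s (n-1)) (values shifted by -1, which
   does not affect order comparisons).

   A POP of length k is given by its generating relations: a list [rels] of
   pairs (x, y) with 1 <= x, y <= k, the pair (x, y) meaning "x > y".
   s contains the POP if there are positions f 0 < ... < f (k-1) such that
   s (f (x-1)) > s (f (y-1)) for each relation (x, y). *)
Definition contains_pop (k : nat) (rels : seq (nat * nat)) (n : nat) (s : 'S_n) : bool :=
  [exists f : {ffun 'I_k -> 'I_n},
     [forall i : 'I_k, forall j : 'I_k, (i < j)%N ==> (f i < f j)%N] &&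
     [forall i : 'I_k, forall j : 'I_k,
        ((i.+1, j.+1) \in rels) ==> (s (f j) < s (f i))%N]].

Definition avoids_pop (k : nat) (rels : seq (nat * nat)) (n : nat) (s : 'S_n) : bool :=
  ~~ contains_pop k rels s.

Definition num_avoiders (k : nat) (rels : seq (nat * nat)) (n : nat) : nat :=
  #|[set s : 'S_n | avoids_pop k rels s]|.

Definition pop_p : seq (nat * nat) := [:: (1, 3); (1, 2); (4, 2)].

Definition a (n : nat) : nat := num_avoiders 4 pop_p n.

(* Main.v *)
Require Import Defs.
From mathcomp Require Import all_boot all_order all_algebra all_fingroup.
From mathcomp Require Import zify.
Import GRing.Theory.
Local Open Scope ring_scope.
Local Open Scope nat_scope.

Fixpoint AD (s : seq nat) : bool :=
  if s is x :: r then ~~ has (fun w => x < w) (behead r) && AD r else true.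
Fixpoint g1 (s : seq nat) : bool :=
  if s is x :: r then (count (fun w => w < x) r <= 1) && g1 r else true.
Fixpoint hasCD (x y : nat) (t : seq nat) : bool :=
  if t is z :: t' then ((z < x) && has (fun w => y < w) t') || hasCD x y t' else false.
Fixpoint occA (x : nat) (r : seq nat) : bool :=
  if r is y :: t then ((y < x) && hasCD x y t) || occA x t else false.
Fixpoint av (s : seq nat) : bool :=
  if s is x :: r then ~~ occA x r && av r else true.

Lemma hasCD_ins x y n w v : y < n -> x <= n ->
  hasCD x y (w ++ n :: v) = hasCD x y (w ++ v) || has (fun z => z < x) w.
Proof.
move=> yn xn; elim: w => [|z w IH] /=.
- by rewrite ltnNge xn /= orbF.
- rewrite IH has_cat /= yn orbT andbT.
  by case: (z < x); rewrite /= ?orbT ?orbF.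
Qed.

Lemma occA_ins x n u v : x <= n -> all (fun z => z < n) u ->
  occA x (u ++ n :: v) = occA x (u ++ v) || (1 < count (fun z => z < x) u).
Proof.
move=> xn; elim: u => [|y u IH] /=.
- by rewrite ltnNge xn orbF.
- case/andP=> yn /IH ->. rewrite hasCD_ins //.
  rewrite has_count.
  case: (y < x) => /=; last by rewrite add0n.
  by case: (count _ u) => [|[|c]]; rewrite /= ?orbF ?orbT.
Qed.

Lemma hasCD_all x y t : all (fun z => z < x) t ->
  hasCD x y t = has (fun w => y < w) (behead t).
Proof.
elim: t => [|z t IH] //= /andP [zx /IH ->]; rewrite zx /=.
by case: t {IH} => [|w t] //=; case: (y < w); rewrite ?orbT ?orbb.
Qed.

Lemma occA_AD n v : all (fun z => z < n) v -> occA n v = ~~ AD v.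
Proof.
elim: v => [|y t IH] //= /andP [yn Ht].
rewrite IH // yn /= hasCD_all //. by rewrite negb_and negbK.
Qed.

Lemma av_ins n u v : all (fun z => z < n) u -> all (fun z => z < n) v ->
  av (u ++ n :: v) = av (u ++ v) && g1 u && AD v.
Proof.
move=> Hu Hv; elim: u Hu => [|x u IH] /=.
- by move=> _; rewrite occA_AD // negbK andbC andbT.
- case/andP=> xn Hu; rewrite occA_ins //; last by apply: ltnW.
  rewrite IH // negb_or -leqNgt.
  by case: (occA _ _); case: (av _); case: (_ <= 1); case: (g1 u); case: (AD v).
Qed.

Set Implicit Arguments. Unset Strict Implicit.

Definition ins (m : nat) (s : seq nat) := take m s ++ size s :: drop m s.
Definition Valid (s : seq nat) m := g1 (take m s) && AD (drop m s).
Definition RL (s : seq nat) i := ~~ has (fun w => nth 0 s i < w) (drop i.+1 s).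
Definition typ (t : seq nat) : bool * bool * bool :=
  let p := index (size t).-1 t in
  ((0 < p) && AD (drop p.-1 t), (p.+2 <= size t) && g1 (take p.+2 t),
   [&& p.+2 <= size t, g1 (take p.+2 t) & RL t p.+1]).

Definition ltQ n := (fun z => z < n).

Lemma all_take_lt n m s : all (ltQ n) s -> all (ltQ n) (take m s).
Proof. by move=> H; apply/allP => z /mem_take /(allP H). Qed.
Lemma all_drop_lt n m s : all (ltQ n) s -> all (ltQ n) (drop m s).
Proof. by move=> H; apply/allP => z /mem_drop /(allP H). Qed.
Lemma notin_lt n s : all (ltQ n) s -> (n \in s) = false.
Proof. by move=> H; apply/negP => /(allP H); rewrite /ltQ ltnn. Qed.
Lemma nothas_lt n r : all (ltQ n) r -> has (fun w => n < w) r = false.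
Proof.
move=> H; apply/negP => /hasP [w /(allP H)]; rewrite /ltQ => wn nw.
by move: (ltn_trans wn nw); rewrite ltnn.
Qed.
Lemma all_behead P (r : seq nat) : all P r -> all P (behead r).
Proof. by case: r => //= x r /andP []. Qed.

Lemma av_insE m s : all (ltQ (size s)) s -> av (ins m s) = av s && Valid s m.
Proof.
move=> H; rewrite /ins av_ins ?cat_take_drop ?andbA //.
- exact: all_take_lt.
- exact: all_drop_lt.
Qed.

Lemma size_ins m s : size (ins m s) = (size s).+1.
Proof. by rewrite /ins size_cat /= addnS -size_cat cat_take_drop. Qed.

Lemma all_ins m s : all (ltQ (size s)) s -> all (ltQ (size (ins m s))) (ins m s).
Proof.
move=> H; rewrite size_ins /ins all_cat /= {2}/ltQ ltnSn /=.
apply/andP; split; apply/allP => z Hz; rewrite /ltQ ltnS ltnW //.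
- by move: Hz => /mem_take /(allP H).
- by move: Hz => /mem_drop /(allP H).
Qed.

Lemma index_ins m s : m <= size s -> all (ltQ (size s)) s -> index (size s) (ins m s) = m.
Proof.
move=> Hm H; rewrite /ins index_cat notin_lt ?all_take_lt //= eqxx addn0.
by rewrite size_takel.
Qed.

Lemma count_take_le (p : pred nat) j s : count p (take j s) <= count p s.
Proof. by rewrite -{2}(cat_take_drop j s) count_cat leq_addr. Qed.

Lemma g1_take j s : g1 s -> g1 (take j s).
Proof.
elim: s j => [|x s IH] [|j] //= /andP [Hc Hg].
by rewrite IH // andbT (leq_trans (count_take_le _ _ _)).
Qed.

Lemma AD_drop j s : AD s -> AD (drop j s).
Proof. by elim: s j => [|x s IH] [|j] //= /andP [_ /IH]. Qed.

Lemma g1_ins n u w : all (fun z => z <= n) u ->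
  g1 (u ++ n :: w) = g1 (u ++ w) && (count (fun z => z < n) w <= 1).
Proof.
elim: u => [|x u IH] /=; first by rewrite andbC.
case/andP=> xn /IH ->; rewrite !count_cat /= ltnNge xn /= add0n.
by rewrite andbA.
Qed.

Lemma all_le n u : all (ltQ n) u -> all (fun z => z <= n) u.
Proof. by apply: sub_all => z; rewrite /ltQ => /ltnW. Qed.

Lemma take1_ins m s : m <= size s -> take m.+1 (ins m s) = take m s ++ [:: size s].
Proof. by move=> Hm; rewrite /ins take_cat size_takel // ltnNge leqnSn /= subSnn /= take0. Qed.

Lemma F1 m s j : all (ltQ (size s)) s -> m <= size s -> g1 (take m s) ->
  j <= m.+1 -> g1 (take j (ins m s)).
Proof.
move=> Hall Hm Hg Hj; rewrite -(take_takel _ Hj) take1_ins //; apply: g1_take.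
by rewrite g1_ins ?cats0 ?Hg // all_le // all_take_lt.
Qed.

Lemma F2 m s : all (ltQ (size s)) s -> m < size s ->
  g1 (take m.+2 (ins m s)) = g1 (take m.+1 s).
Proof.
move=> Hall Hm; rewrite /ins take_cat (size_takel (ltnW Hm)) ltnNge (ltnW (ltnW (leqnn _))) /=.
have -> : m.+2 - m = 2 by lia.
rewrite (drop_nth 0 Hm) /= take0 g1_ins ?all_le ?all_take_lt //.
rewrite (take_nth 0 Hm) -cats1 /=.
by case: (_ < _); rewrite andbT.
Qed.

Lemma F3 m s j : all (ltQ (size s)) s -> m.+3 <= j -> j <= (size s).+1 ->
  g1 (take j (ins m s)) = false.
Proof.
move=> Hall Hj1 Hj2; have Hm : m <= size s by lia.
rewrite /ins take_cat size_takel // ltnNge (leq_trans _ Hj1) ?leqnSn //; last by lia.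
have -> : j - m = (j - m.+1).+1 by lia.
rewrite /= g1_ins ?all_le ?all_take_lt //.
have := all_take_lt (j - m.+1) (all_drop_lt m Hall); rewrite all_count => /eqP.
rewrite /ltQ => ->; rewrite size_takel ?size_drop; last by lia.
apply/negbTE; rewrite negb_and; apply/orP; right; rewrite -ltnNge; lia.
Qed.

Lemma F4 m s j : all (ltQ (size s)) s -> m <= size s -> AD (drop m s) ->
  m <= j -> AD (drop j (ins m s)).
Proof.
move=> Hall Hm Had Hj; rewrite /ins drop_cat size_takel // ltnNge Hj /=.
case: (j - m) => [|k] /=; last exact: AD_drop.
by rewrite nothas_lt ?Had // all_behead // all_drop_lt.
Qed.

Lemma F5 m s : all (ltQ (size s)) s -> 0 < m -> m <= size s -> AD (drop m s) ->
  AD (drop m.-1 (ins m s)) = RL s m.-1.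
Proof.
case: m => [|m] // Hall _ Hm Had /=.
rewrite /ins (take_nth 0 Hm) cat_rcons drop_size_cat ?(size_takel (ltnW Hm)) //=.
by rewrite (nothas_lt (all_behead (all_drop_lt m.+1 Hall))) Had /= andbT.
Qed.

Lemma F6 m s j : all (ltQ (size s)) s -> m <= size s -> j.+2 <= m ->
  AD (drop j (ins m s)) = false.
Proof.
move=> Hall Hm Hj.
have Hjm : j < size (take m s) by rewrite size_takel //; lia.
have Hjm' : j.+1 < size (take m s) by rewrite size_takel //; lia.
rewrite /ins drop_cat Hjm (drop_nth 0 Hjm) (drop_nth 0 Hjm') /=.
apply/negbTE; rewrite negb_and negbK; apply/orP; left.
apply/hasP; exists (size s); first by rewrite mem_cat in_cons eqxx orbT.
rewrite nth_take; last by lia.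
have Hjs : j < size s by lia.
exact: (allP Hall) _ (mem_nth 0 Hjs).
Qed.

Lemma F7 m s i : all (ltQ (size s)) s -> m <= size s -> i < m ->
  RL (ins m s) i = false.
Proof.
move=> Hall Hm Hi; rewrite /RL; apply/negbTE; rewrite negbK.
apply/hasP; exists (size s).
- rewrite /ins drop_cat size_takel //; case: ifP => _.
  + by rewrite mem_cat in_cons eqxx orbT.
  + have -> : i.+1 - m = 0 by lia.
    by rewrite drop0 in_cons eqxx.
- rewrite /ins nth_cat size_takel // Hi nth_take //.
  have His : i < size s by lia.
  exact: (allP Hall) _ (mem_nth 0 His).
Qed.

Lemma F8 m s : all (ltQ (size s)) s -> m <= size s -> RL (ins m s) m = true.
Proof.
move=> Hall Hm; rewrite /RL /ins nth_cat drop_cat size_takel // ltnn ltnNge leqnSn /=.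
by rewrite subnn subSnn /= drop0 (nothas_lt (all_drop_lt m Hall)).
Qed.

Lemma F9 m s : m <= size s -> RL (ins m s) m.+1 = RL s m.
Proof.
move=> Hm; rewrite /RL /ins nth_cat drop_cat size_takel // ltnNge leqnSn /=.
rewrite ltnNge (leq_trans (leqnSn _) (leqnSn _)) /=.
have -> : m.+1 - m = 1 by lia.
have -> : m.+2 - m = 2 by lia.
by rewrite /= nth_drop addn0 drop_drop.
Qed.

Lemma typ_ins m s : all (ltQ (size s)) s -> m <= size s -> g1 (take m s) -> AD (drop m s) ->
  typ (ins m s) = ((0 < m) && RL s m.-1, (m < size s) && g1 (take m.+1 s),
                   [&& m < size s, g1 (take m.+1 s) & RL s m]).
Proof.
move=> Hall Hm Hg Had; rewrite /typ size_ins /= index_ins //.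
congr (_, _, _).
- case: m Hm Hg Had => [|m] //= Hm Hg Had.
  exact: (F5 (m := m.+1) Hall).
- by rewrite ltnS; case: ltnP => Hlt //=; rewrite F2.
- by rewrite ltnS; case: ltnP => Hlt //=; rewrite F2 // F9 // (ltnW Hlt).
Qed.

Definition trip := (bool * bool * bool)%type.
Definition Phi (g : trip -> nat) (t : trip) : nat :=
  let: (x, y, z) := t in
  (if x then g (false, true, false) else 0) + g (false, true, true) + g (true, y, z)
  + (if y then g (z, false, false) else 0).

Ltac kill := repeat match goal with |- context [?a == ?b] =>
  (rewrite (_ : (a == b) = false); last by lia) ||
  (rewrite (_ : (a == b) = true); last by lia) end;
  repeat match goal with |- context [leq ?a ?b] =>
  (rewrite (_ : (leq a b) = false); last by lia) ||
  (rewrite (_ : (leq a b) = true); last by lia) end.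

Lemma typ_child m s j : all (ltQ (size s)) s -> j <= (size s).+1 -> Valid (ins m s) j ->
  typ (ins j (ins m s)) = ((0 < j) && RL (ins m s) j.-1, (j < (size s).+1) && g1 (take j.+1 (ins m s)),
      [&& j < (size s).+1, g1 (take j.+1 (ins m s)) & RL (ins m s) j]).
Proof.
move=> Hall Hj /andP [Hg' Had'].
by rewrite typ_ins ?size_ins // -(size_ins m s) all_ins.
Qed.

Lemma c1_small m s j : all (ltQ (size s)) s -> m <= size s -> j <= m ->
  (0 < j) && RL (ins m s) j.-1 = false.
Proof. by case: j => [|j] //= Hall Hm Hj; rewrite F7. Qed.

Lemma PW (g : trip -> nat) m s j : all (ltQ (size s)) s -> m <= size s ->
  g1 (take m s) -> AD (drop m s) -> j <= (size s).+1 ->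
  (if Valid (ins m s) j then g (typ (ins j (ins m s))) else 0) =
  (if [&& 0 < m, RL s m.-1 & j.+1 == m] then g (false, true, false) else 0)
  + (if j == m then g (false, true, true) else 0)
  + (if j == m.+1 then g (true, (m < size s) && g1 (take m.+1 s),
                            [&& m < size s, g1 (take m.+1 s) & RL s m]) else 0)
  + (if [&& m < size s, g1 (take m.+1 s) & j == m.+2] then g (RL s m, false, false) else 0).
Proof.
move=> Hall Hm Hg Had Hj.
have [Hlt|Hge] := ltnP j.+1 m.
  rewrite /Valid F6 // andbF.
  by kill; rewrite !andbF.
have [Heq|Hne] := eqVneq j.+1 m.
  subst m.
  have H5 : AD (drop j (ins j.+1 s)) = RL s j := F5 (m:=j.+1) Hall isT Hm Had.
  have F1j : g1 (take j (ins j.+1 s)) by apply: F1 => //; lia.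
  have F1j' : g1 (take j.+1 (ins j.+1 s)) by apply: F1 => //; lia.
  rewrite /Valid F1j H5 /=.
  kill; rewrite !andbF !addn0 andbT.
  case: (boolP (RL s j)) => Hr //.
  have HV : Valid (ins j.+1 s) j by rewrite /Valid F1j H5.
  rewrite typ_child // (c1_small Hall Hm (leqnSn j)) F1j' F7 //.
  by kill.
have [Heq2|Hne2] := eqVneq j m.
  subst m.
  have F1j : g1 (take j (ins j s)) by apply: F1 => //; lia.
  have F1j' : g1 (take j.+1 (ins j s)) by apply: F1 => //; lia.
  have HV : Valid (ins j s) j by rewrite /Valid F1j F4.
  rewrite HV typ_child // c1_small // F1j' F8 //.
  kill; rewrite !andbF /= !addn0.
  by kill.
have [Heq3|Hne3] := eqVneq j m.+1.
  subst j.
  have F1j : g1 (take m.+1 (ins m s)) by apply: F1 => //; lia.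
  have HV : Valid (ins m s) m.+1 by rewrite /Valid F1j F4 //; lia.
  rewrite HV typ_child // F8 // F9 //.
  kill; rewrite !andbF /= add0n addn0 ltnS.
  case: (ltnP m (size s)) => Hms //=.
  by rewrite F2.
have [Heq4|Hne4] := eqVneq j m.+2.
  subst j.
  have Hms : m < size s by lia.
  rewrite /Valid F2 // F4 //; last by lia.
  rewrite andbT.
  kill; rewrite /= ?andbF ?andbT ?add0n.
  case: (boolP (g1 (take m.+1 s))) => Hg2 //.
  have HV : Valid (ins m s) m.+2 by rewrite /Valid F2 // F4 //; lia.
  rewrite typ_child //= F9 //.
  case: (ltnP m.+2 (size s).+1) => Hm2 /=; last by [].
  by rewrite F3.
have Hbig : m.+3 <= j by lia.
rewrite /Valid F3 //.
by kill; rewrite !andbF.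
Qed.

Lemma sum_ind K (b : bool) c v :
  \sum_(0 <= j < K) (if b && (j == c) then v else 0) = if b && (c < K) then v else 0.
Proof.
elim: K => [|K IH]; first by rewrite big_geq //; case: b.
rewrite big_nat_recr //= IH.
case: b {IH} => //=.
case: (ltngtP c K) => Hc; kill; rewrite ?addn0 ?add0n //.

Qed.

Lemma key g m s : all (ltQ (size s)) s -> m <= size s -> g1 (take m s) -> AD (drop m s) ->
  \sum_(0 <= j < (size s).+2) (if Valid (ins m s) j then g (typ (ins j (ins m s))) else 0)
  = Phi g (typ (ins m s)).
Proof.
move=> Hall Hm Hg Had.
rewrite (eq_big_nat _ _ (F2 := fun j =>
  (if ((0 < m) && RL s m.-1) && (j == m.-1) then g (false, true, false) else 0)
  + (if true && (j == m) then g (false, true, true) else 0)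
  + (if true && (j == m.+1) then g (true, (m < size s) && g1 (take m.+1 s),
                            [&& m < size s, g1 (take m.+1 s) & RL s m]) else 0)
  + (if ((m < size s) && g1 (take m.+1 s)) && (j == m.+2) then g (RL s m, false, false) else 0))).
  rewrite !big_split typ_ins // !sum_ind /=.
  have -> : m.-1 < (size s).+2 by lia.
  have -> : m < (size s).+2 by lia.
  have -> : m.+1 < (size s).+2 by lia.
  rewrite !andbT /=.
  case: (ltnP m (size s)) => Hms /=; last by rewrite !addn0.
  have -> : m.+2 < (size s).+2 by lia.
  by case: (g1 _); case: (RL s m).
move=> j /andP [_ Hj]; rewrite PW //.
by rewrite !andbA; case: m {Hm Hg Had} => [|m] //=; rewrite ?eqSS.
Qed.

Lemma key_av g m s : all (ltQ (size s)) s -> m <= size s -> g1 (take m s) -> AD (drop m s) ->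
  av (ins m s) ->
  \sum_(0 <= j < (size (ins m s)).+1) (if av (ins j (ins m s)) then g (typ (ins j (ins m s))) else 0)
  = Phi g (typ (ins m s)).
Proof.
move=> Hall Hm Hg Had Hav; rewrite size_ins -(key g Hall Hm Hg Had).
have Hall' := all_ins m Hall.
by apply: eq_big_nat => j _; rewrite (av_insE _ Hall') Hav.
Qed.

Definition perms n := permutations (iota 0 n).

Lemma perm_ins j s : perm_eq (ins j s) (size s :: s).
Proof.
by rewrite /ins -cat1s perm_catCA /= perm_cons cat_take_drop.
Qed.

Lemma iotaSr n : perm_eq (iota 0 n.+1) (n :: iota 0 n).
Proof. by rewrite -addn1 iotaD add0n /= perm_catC. Qed.

Lemma perms_all n s : s \in perms n -> all (ltQ (size s)) s.
Proof.
rewrite mem_permutations => Hp; rewrite (perm_size Hp) size_iota.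
by apply/allP => x; rewrite (perm_mem Hp) mem_iota.
Qed.

Lemma perms_size n s : s \in perms n -> size s = n.
Proof. by rewrite mem_permutations => /perm_size ->; rewrite size_iota. Qed.



Lemma ins_perms n j s : s \in perms n -> ins j s \in perms n.+1.
Proof.
move=> Hs; have Hn := perms_size Hs; move: Hs.
rewrite !mem_permutations => Hp.
apply: (perm_trans (perm_ins j s)); rewrite Hn.
rewrite perm_sym; apply: (perm_trans (iotaSr n)).
by rewrite perm_cons perm_sym.
Qed.

Lemma rem_ins j s : size s \notin s -> j <= size s ->
  index (size s) (ins j s) = j /\ rem (size s) (ins j s) = s.
Proof.
move=> Hn Hj.
have Hnt : size s \notin take j s by apply/negP => /mem_take; apply/negP.
have Hi : index (size s) (ins j s) = j.
  by rewrite /ins index_cat (negbTE Hnt) /= eqxx addn0 size_takel.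
split=> //; rewrite remE Hi /ins.
rewrite takel_cat ?size_takel // take_takel //.
rewrite drop_cat size_takel // ltnNge leqnSn /=.
have -> : j.+1 - j = 1 by lia.
by rewrite /= drop0 cat_take_drop.
Qed.

Lemma perms_dec n t : t \in perms n.+1 ->
  exists j s, [/\ s \in perms n, j <= n & t = ins j s].
Proof.
move=> Ht; have Hsz := perms_size Ht; move: Ht.
rewrite mem_permutations => Hp.
have Hn : n \in t by rewrite (perm_mem Hp) mem_iota; lia.
have Hu : uniq t by rewrite (perm_uniq Hp) iota_uniq.
set j := index n t; set s := rem n t.
have Hss : size s = n by rewrite size_rem // Hsz.
have Hjt : j < size t by rewrite index_mem.
have Hts : t = ins j s.
  rewrite /ins Hss /s remE -/j takel_cat ?(size_takel (ltnW Hjt)) // take_takel //.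
  rewrite drop_cat size_takel ?(ltnW Hjt) // ltnn subnn drop0.
  by rewrite -{1}(cat_take_drop j t) (drop_nth 0 Hjt) nth_index.
exists j, s; split => //.
- rewrite mem_permutations -(perm_cons n).
  apply: (perm_trans _ (iotaSr n)); rewrite -Hss perm_sym.
  apply: (perm_trans _ (perm_ins j s)).
  by rewrite -Hts Hss perm_sym.
- by rewrite -ltnS -Hsz.
Qed.

Lemma perms_split n :
  perm_eq (perms n.+1) [seq ins j s | s <- perms n, j <- iota 0 n.+1].
Proof.
apply: uniq_perm.
- exact: permutations_uniq.
- apply: allpairs_uniq; [exact: permutations_uniq | exact: iota_uniq |].
  move=> [a b] [a' b'] /allpairsP[[a1 b1] [Ha Hb [= -> ->]]].
  move=> /allpairsP[[a2 b2] [Ha' Hb' [= -> ->]]] Heq.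
  rewrite /= in Heq.
  have {}Ha : a1 \in perms n := Ha.
  have {}Ha' : a2 \in perms n := Ha'.
  have {}Hb : b1 \in iota 0 n.+1 := Hb.
  have {}Hb' : b2 \in iota 0 n.+1 := Hb'.
  have Hna : size a1 \notin a1 by rewrite notin_lt // (perms_all Ha).
  have Hna' : size a2 \notin a2 by rewrite notin_lt // (perms_all Ha').
  have Hb1 : b1 <= size a1 by rewrite (perms_size Ha); move: Hb; rewrite mem_iota; lia.
  have Hb2 : b2 <= size a2 by rewrite (perms_size Ha'); move: Hb'; rewrite mem_iota; lia.
  have [i1 r1] := rem_ins Hna Hb1; have [i2 r2] := rem_ins Hna' Hb2.
  have Es : size a1 = size a2 by rewrite (perms_size Ha) (perms_size Ha').
  rewrite Heq Es in i1 r1.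
  by rewrite -i1 -r1 i2 r2.
- move=> t; apply/idP/idP.
  + case/perms_dec => j [s [Hs Hj ->]]; apply/allpairsP; exists (s, j).
    split => //. have -> : (s, j).2 = j by []. rewrite mem_iota; lia.
  + by case/allpairsP => [[s j] /= [Hs _ ->]]; apply: ins_perms.
Qed.

Definition Ssum n (g : trip -> nat) := \sum_(t <- perms n | av t) g (typ t).

Lemma S_rec n g : 0 < n -> Ssum n.+1 g = Ssum n (Phi g).
Proof.
case: n => // n _.
rewrite /Ssum (perm_big _ (perms_split n.+1)) big_mkcond big_allpairs_dep.
rewrite [RHS]big_mkcond.
apply: eq_big_seq => s Hs.
case: (perms_dec Hs) => m [s0 [Hs0 Hm Hs']]; subst s.
have Hall0 := perms_all Hs0; have Hsz0 := perms_size Hs0.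
have Hm' : m <= size s0 by rewrite Hsz0.
case Hav: (av (ins m s0)).
- move: (Hav); rewrite av_insE // => /andP [_ /andP [Hg Had]].
  rewrite -(key_av g Hall0 Hm' Hg Had Hav).
  have -> : (size (ins m s0)).+1 = n.+2 by rewrite size_ins Hsz0.
  by rewrite /index_iota subn0.
- rewrite big1_seq // => j _.
  by rewrite (av_insE _ (all_ins m Hall0)) Hav.
Qed.

Definition Acnt n := count av (perms n).
Definition c0 : trip -> nat := fun _ => 1.

Lemma Acnt_S n : Acnt n = Ssum n c0.
Proof. by rewrite /Ssum /c0 sum1_count. Qed.

Lemma Phi_ident t : Phi (Phi (Phi c0)) t + 3 * Phi c0 t = 4 * Phi (Phi c0) t + c0 t.
Proof. by case: t => [[x y] z]; case: x; case: y; case: z. Qed.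

Lemma S_lin n f h k : Ssum n (fun t => f t + k * h t) = Ssum n f + k * Ssum n h.
Proof. by rewrite /Ssum big_split /= big_distrr. Qed.



Lemma Acnt_rec n : 0 < n -> Acnt n.+3 + 3 * Acnt n.+1 = 4 * Acnt n.+2 + Acnt n.
Proof.
move=> Hn.
have E1 : Acnt n.+1 = Ssum n (Phi c0) by rewrite Acnt_S S_rec.
have E2 : Acnt n.+2 = Ssum n (Phi (Phi c0)) by rewrite Acnt_S S_rec // S_rec.
have E3 : Acnt n.+3 = Ssum n (Phi (Phi (Phi c0))) by rewrite Acnt_S S_rec // S_rec // S_rec.
rewrite E1 E2 E3 Acnt_S -S_lin addnC -(S_lin n c0 (Phi (Phi c0)) 4).
by apply: eq_bigr => t _; rewrite Phi_ident addnC.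
Qed.

Lemma Acnt_base : [/\ Acnt 0 = 1, Acnt 1 = 1, Acnt 2 = 2 & Acnt 3 = 6].
Proof. by split; vm_compute. Qed.

Definition Bs m K := \sum_(0 <= i < K) 'C(m + 2 * i, 3 * i).

Lemma Bs_ext m K : m < K -> Bs m K = Bs m m.+1.
Proof.
elim: K => [|K IH] // HK.
case: (eqVneq m K) => [->|HmK] //.
rewrite /Bs big_nat_recr //= -/(Bs m K) IH; last by lia.
by rewrite bin_small ?addn0 //; lia.
Qed.

Lemma binom_id M k :
  'C(M.+3, k.+3) + 3 * 'C(M.+1, k.+3) = 3 * 'C(M.+2, k.+3) + 'C(M, k.+3) + 'C(M, k).
Proof. rewrite !binS; lia. Qed.

Lemma Bs_rec m K : m.+3 < K ->
  Bs m.+3 K.+1 + 3 * Bs m.+1 K.+1 = 4 * Bs m.+2 K.+1 + Bs m K.+1.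
Proof.
move=> HK.
have EX x : Bs x K.+1 = 1 + \sum_(0 <= i < K) 'C((x + 2 * i).+2, (3 * i).+3).
  rewrite /Bs big_nat_recl // muln0 addn0 bin0; congr (1 + _).
  by apply: eq_big_nat => i _; congr 'C(_, _); lia.
have Q : \sum_(0 <= i < K) 'C(m.+2 + 2 * i, 3 * i) = Bs m.+2 K.+1.
  by rewrite -/(Bs m.+2 K) !(@Bs_ext m.+2) //; lia.
have Key : \sum_(0 <= i < K) 'C((m.+3 + 2 * i).+2, (3 * i).+3)
         + 3 * \sum_(0 <= i < K) 'C((m.+1 + 2 * i).+2, (3 * i).+3)
         = 3 * \sum_(0 <= i < K) 'C((m.+2 + 2 * i).+2, (3 * i).+3)
         + \sum_(0 <= i < K) 'C((m + 2 * i).+2, (3 * i).+3)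
         + \sum_(0 <= i < K) 'C(m.+2 + 2 * i, 3 * i).
  rewrite !big_distrr -!big_split /=.
  apply: eq_big_nat => i _.
  have := binom_id (m + 2 * i).+2 (3 * i).
  have -> : (m + 2 * i).+2.+3 = (m.+3 + 2 * i).+2 by lia.
  have -> : (m + 2 * i).+2.+1 = (m.+1 + 2 * i).+2 by lia.
  have -> : (m + 2 * i).+2.+2 = (m.+2 + 2 * i).+2 by lia.
  have -> : (m + 2 * i).+2 = m.+2 + 2 * i by lia.
  move=> ->. 
  have -> : m.+2 + 2 * i = (m + 2 * i).+2 by lia.
  by [].
move: Key; rewrite Q !EX; lia.
Qed.

Definition bb n := \sum_(i < n) 'C(n + 2 * i - 1, 3 * i).

Lemma bb_Bs m K : m < K -> bb m.+1 = Bs m K.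
Proof.
move=> HK; rewrite Bs_ext // /Bs big_mkord /bb.
by apply: eq_bigr => i _; congr 'C(_, _); lia.
Qed.

Lemma bb_rec m : bb m.+4 + 3 * bb m.+2 = 4 * bb m.+3 + bb m.+1.
Proof.
have h1 : m.+3 < (m.+4).+2 by lia.
have h2 : m.+1 < (m.+4).+2 by lia.
have h3 : m.+2 < (m.+4).+2 by lia.
have h4 : m < (m.+4).+2 by lia.
rewrite (bb_Bs h1) (bb_Bs h2) (bb_Bs h3) (bb_Bs h4) Bs_rec //; lia.
Qed.

Lemma bb_base : [/\ bb 1 = 1, bb 2 = 2 & bb 3 = 6].
Proof. by split; rewrite /bb !big_ord_recr big_ord0. Qed.

Lemma hasCD_iff x y t : hasCD x y t <->
  exists k l, [/\ k < l, l < size t, nth 0 t k < x & y < nth 0 t l].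
Proof.
elim: t => [|z t IH] /=.
  by split => //; case=> k [l [_ H _ _]].
split.
- case/orP.
  + case/andP => zx /(has_nthP 0) [l Hl Hy]. by exists 0, l.+1.
  + case/IH => k [l [H1 H2 H3 H4]]. by exists k.+1, l.+1.
- case=> [[|k] [[|l] [H1 H2 H3 H4]]] //=.
  + apply/orP; left; rewrite H3 /=; apply/(has_nthP 0); by exists l.
  + apply/orP; right; apply/IH; by exists k, l.
Qed.

Lemma occA_iff x r : occA x r <->
  exists j k l, [/\ j < k, k < l, l < size r &
    [/\ nth 0 r j < x, nth 0 r k < x & nth 0 r j < nth 0 r l]].
Proof.
elim: r => [|y t IH] /=.
  by split => //; case=> j [k [l [_ _ H _]]].
split.
- case/orP.
  + case/andP => yx /hasCD_iff [k [l [H1 H2 H3 H4]]]. by exists 0, k.+1, l.+1.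
  + case/IH => j [k [l [H1 H2 H3 H4]]]. by exists j.+1, k.+1, l.+1.
- case=> [[|j] [[|k] [[|l] [H1 H2 H3 [H4 H5 H6]]]]] //=.
  + apply/orP; left; rewrite H4 /=; apply/hasCD_iff; by exists k, l.
  + apply/orP; right; apply/IH; by exists j, k, l.
Qed.

Definition cont4 (t : seq nat) := exists i j k l, [/\ i < j, j < k, k < l, l < size t &
  [/\ nth 0 t j < nth 0 t i, nth 0 t k < nth 0 t i & nth 0 t j < nth 0 t l]].

Lemma av_iff t : av t = false <-> cont4 t.
Proof.
elim: t => [|x r IH] /=.
  by split => //; case=> i [j [k [l [_ _ _ H _]]]].
split.
- case/nandP => [/negbNE /occA_iff [j [k [l [H1 H2 H3 [H4 H5 H6]]]]] | /negbTE /IH].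
  + by exists 0, j.+1, k.+1, l.+1.
  + case=> i [j [k [l [H1 H2 H3 H4 H5]]]]. by exists i.+1, j.+1, k.+1, l.+1.
- case=> [[|i] [[|j] [[|k] [[|l] [H1 H2 H3 H4 H5]]]]] //=.
  + apply/negbTE; rewrite negb_and negbK; apply/orP; left.
    apply/occA_iff; by exists j, k, l.
  + apply/negbTE; rewrite negb_and; apply/orP; right; apply/negbT/IH.
    by exists i, j, k, l.
Qed.

Definition w n (s : 'S_n) : seq nat := [seq val (s i) | i <- enum 'I_n].

Lemma size_w n (s : 'S_n) : size (w s) = n.
Proof. by rewrite /w size_map size_enum_ord. Qed.

Lemma nth_w n (s : 'S_n) (i : 'I_n) : nth 0 (w s) i = s i.
Proof. by rewrite /w (nth_map i) ?size_enum_ord ?ltn_ord // nth_ord_enum. Qed.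

Lemma nth_w' n (s : 'S_n) i (Hi : i < n) : nth 0 (w s) i = s (Ordinal Hi).
Proof. exact: (nth_w s (Ordinal Hi)). Qed.

Definition o0 : 'I_4 := @Ordinal 4 0 isT.
Definition o1 : 'I_4 := @Ordinal 4 1 isT.
Definition o2 : 'I_4 := @Ordinal 4 2 isT.
Definition o3 : 'I_4 := @Ordinal 4 3 isT.

Lemma contains_cont4 n (s : 'S_n) : contains_pop 4 pop_p s <-> cont4 (w s).
Proof.
split.
- case/existsP => f /andP [/forallP Hinc /forallP Hrel].
  have inc (a b : 'I_4) : (a < b)%N -> f a < f b.
    by move=> Hab; move: (Hinc a) => /forallP /(_ b) /implyP /(_ Hab).
  have rel (a b : 'I_4) : (a.+1, b.+1) \in pop_p -> s (f b) < s (f a).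
    by move=> Hab; move: (Hrel a) => /forallP /(_ b) /implyP /(_ Hab).
  exists (f o0), (f o1), (f o2), (f o3); rewrite !nth_w size_w ltn_ord.
  split; try exact: inc; try done.
  split; by apply: rel.
- case=> i [j [k [l [H1 H2 H3 H4 [H5 H6 H7]]]]].
  rewrite size_w in H4.
  have Hi : i < n by lia. have Hj : j < n by lia. have Hk : k < n by lia.
  rewrite (nth_w' s Hi) (nth_w' s Hj) (nth_w' s Hk) (nth_w' s H4) in H5 H6 H7.
  apply/existsP.
  exists [ffun x : 'I_4 => if val x == 0 then Ordinal Hi else if val x == 1 then Ordinal Hj
                          else if val x == 2 then Ordinal Hk else Ordinal H4].
  apply/andP; split; apply/forallP => x; apply/forallP => y; rewrite !ffunE.
  + by case: x => [[|[|[|[|x]]]] Hx]; case: y => [[|[|[|[|y]]]] Hy] //=; lia.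
  + by case: x => [[|[|[|[|x]]]] Hx]; case: y => [[|[|[|[|y]]]] Hy].
Qed.

Lemma avoids_av n (s : 'S_n) : avoids_pop 4 pop_p s = av (w s).
Proof.
rewrite /avoids_pop; apply/idP/idP.
- move=> H; case Hav: (av (w s)) => //; move/negP: H; case.
  by apply/contains_cont4; apply/av_iff.
- move=> H; apply/negP => /contains_cont4 /av_iff; by rewrite H.
Qed.

Lemma w_inj n : injective (@w n).
Proof.
move=> s s' H; apply/permP => i; apply: val_inj => /=.
by have := nth_w s i; rewrite H nth_w => ->.
Qed.

Lemma w_perms n (s : 'S_n) : w s \in perms n.
Proof.
rewrite mem_permutations; apply: uniq_perm.
- rewrite /w map_inj_uniq ?enum_uniq // => i j /val_inj; exact: perm_inj.
- exact: iota_uniq.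
- move=> x; rewrite mem_iota add0n /=; apply/idP/idP.
  + by case/mapP => i _ ->; exact: ltn_ord.
  + move=> Hx; apply/mapP; exists ((s^-1)%g (Ordinal Hx)); first by rewrite mem_enum.
    by rewrite permKV.
Qed.

Lemma perms_w n t : t \in perms n -> exists s : 'S_n, w s = t.
Proof.
move=> Ht; have Hsz := perms_size Ht; have Hall := perms_all Ht.
move: Ht; rewrite mem_permutations => Hp.
have Hu : uniq t by rewrite (perm_uniq Hp) iota_uniq.
have Hnth (i : 'I_n) : nth 0 t i < n.
  have := allP Hall (nth 0 t i) (mem_nth 0 (_ : (i : nat) < size t)).
  by rewrite Hsz /ltQ; apply; rewrite ltn_ord.
pose f (i : 'I_n) : 'I_n := insubd i (nth 0 t i).
have fval (i : 'I_n) : val (f i) = nth 0 t i by rewrite /f insubdK //; apply: Hnth.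
have finj : injective f.
  move=> i j H; apply: val_inj; move: (congr1 val H); rewrite !fval => /eqP.
  by rewrite nth_uniq ?Hsz ?ltn_ord // => /eqP.
exists (perm finj); apply: (@eq_from_nth _ 0); first by rewrite size_w Hsz.
by move=> i; rewrite size_w => Hi; rewrite (nth_w' _ Hi) permE fval.
Qed.

Lemma a_Acnt n : a n = Acnt n.
Proof.
rewrite /a /num_avoiders cardE /enum_mem size_filter -enumT.
rewrite (@eq_count _ _ (preim (@w n) av)); last first.
  by move=> s; rewrite /= inE avoids_av.
rewrite -(count_map (@w n) av) /Acnt.
suff H : perm_eq [seq w i | i <- enum 'S_n] (perms n).
  by move/seq.permP: H; apply.
apply: uniq_perm.
- by rewrite map_inj_uniq ?enum_uniq //; exact: w_inj.
- exact: permutations_uniq.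
- move=> t; apply/idP/idP.
  + by case/mapP => s _ ->; apply: w_perms.
  + by case/perms_w => s <-; apply: map_f; rewrite mem_enum.
Qed.

Lemma a_rec_nat m : a m.+4 + 3 * a m.+2 = 4 * a m.+3 + a m.+1.
Proof. by rewrite !a_Acnt Acnt_rec. Qed.

Lemma a_base : [/\ a 0 = 1, a 1 = 1, a 2 = 2 & a 3 = 6].
Proof. by rewrite !a_Acnt; case: Acnt_base. Qed.

Lemma a_bb m : a m.+1 = bb m.+1.
Proof.
elim/ltn_ind: m => m IH.
case: m IH => [|[|[|k]]] IH.
- by case: a_base => _ -> _ _; case: bb_base.
- by case: a_base => _ _ -> _; case: bb_base.
- by case: a_base => _ _ _ ->; case: bb_base.
- have E1 := a_rec_nat k; have E2 := bb_rec k.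
  have I1 := IH k (ltnW (ltnW (ltnSn _))).
  have I2 := IH k.+1 (ltnW (ltnSn _)).
  have I3 := IH k.+2 (ltnSn _).
  lia.
Qed.

Unset Implicit Arguments. Set Strict Implicit.
Local Open Scope ring_scope.

Theorem theorem3p12 :
  [/\ [/\ a 0 = 1%N, a 1 = 1%N & a 2 = 2%N],
   (forall n : nat, (3 <= n)%N ->
      (a n)%:Z = (4 * (a (n - 1)%N)%:Z - 3 * (a (n - 2)%N)%:Z + (a (n - 3)%N)%:Z)%R),
   (forall n : nat, (1 <= n)%N ->
      (a n = \sum_(i < n) 'C(n + 2 * i - 1, 3 * i))%N) &
   (* generating function identity, read coefficientwise:
      (1 - 4x + 3x^2 - x^3) * sum_n a(n) x^n = 1 - 3x + x^2 *)
   (forall n : nat,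
      ((a n)%:Z - (if (1 <= n)%N then 4 * (a (n - 1)%N)%:Z else 0)
                + (if (2 <= n)%N then 3 * (a (n - 2)%N)%:Z else 0)
                - (if (3 <= n)%N then (a (n - 3)%N)%:Z else 0))%R
      = (if n == 0%N then 1 else if n == 1%N then -3 else if n == 2%N then 1 else 0)%R)].
Proof.
have [b0 b1 b2 b3] := a_base.
have Hrec : forall n : nat, (3 <= n)%N ->
      (a n)%:Z = (4 * (a (n - 1)%N)%:Z - 3 * (a (n - 2)%N)%:Z + (a (n - 3)%N)%:Z)%R.
  case=> [|[|[|[|m]]]] // _.
  - by rewrite /= b3 b2 b1 b0.
  - have := a_rec_nat m.
    have -> : (m.+4 - 1 = m.+3)%N by lia.
    have -> : (m.+4 - 2 = m.+2)%N by lia.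
    have -> : (m.+4 - 3 = m.+1)%N by lia.
    lia.
split => //.
- by move=> [|m] // _; rewrite a_bb.
- case=> [|[|[|m]]] /=.
  + by rewrite b0.
  + by rewrite b1 b0.
  + by rewrite b2 b1 b0.
  + rewrite (Hrec m.+3) //. lia.
Qed.
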